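(* For any valid scheme (satisfying (C1)–(C8)), any database $n$, any message index $k$, and any $\mathcal{R}_U$, \[ 0\ \ge\ H\big(A_n^{[k,\mathcal{R}_U]}\mid Q_n^{[k,\mathcal{R}_U]},\mathcal{R}_U\big)-H(\mathcal{R}_S). \]
   Context: Model (SPIR with user-side common randomness). There are $N\ge1$ non-colluding databases, each storing the same $K\ge2$ messages $W_1,\dots,W_K$. Each message consists of $L$ i.i.d. symbols uniform over a sufficiently large finite field $\mathbb{F}_q$; entropies are in $q$-ary units, so $H(W_k)=L$ and $H(W_{1:K})=KL$. The databases share server-side common randomness $\mathcal{R}_S$, unknown to the user. The user holds user-side common randomness $\mathcal{R}_U$, a subset of the components of $\mathcal{R}_S$, unknown to the databases except for its size (uniform over subsets of given cardinality). $\mathcal{F}$ is the user's retrieval-strategy randomness. To retrieve $W_k$ the user sends $Q_n^{[k,\mathcal{R}_U]}$ to database $n$, receiving $A_n^{[k,\mathcal{R}_U]}$; $W_{\bar k}=\{W_j:j\ne k\}$. A valid scheme satisfies for all $k,n,\mathcal{R}_U$: (C1) $I(W_{1:K};k,\mathcal{F},\mathcal{R}_S,\mathcal{R}_U)=0$; (C2) $I(Q_{1:N}^{[k,\mathcal{R}_U]};W_{1:K},\mathcal{R}_S\setminus\mathcal{R}_U)=0$; (C3) $H(Q_{1:N}^{[k,\mathcal{R}_U]}\mid\mathcal{F})=0$; (C4) $H(A_n^{[k,\mathcal{R}_U]}\mid Q_n^{[k,\mathcal{R}_U]},W_{1:K},\mathcal{R}_S)=0$; (C5) $H(W_k\mid\mathcal{F},A_{1:N}^{[k,\mathcal{R}_U]},\mathcal{R}_U)=0$;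 (C6) user privacy: for all $k,k',n,\mathcal{R}_U$ there is $\mathcal{R}_U'$ with $H(\mathcal{R}_U')=H(\mathcal{R}_U)$ and $(Q_n^{[k,\mathcal{R}_U]},A_n^{[k,\mathcal{R}_U]},W_{1:K},\mathcal{R}_S)\sim(Q_n^{[k',\mathcal{R}_U']},A_n^{[k',\mathcal{R}_U']},W_{1:K},\mathcal{R}_S)$; (C7) $I(W_{\bar k};\mathcal{F},A_{1:N}^{[k,\mathcal{R}_U]},\mathcal{R}_U)=0$; (C8) $I(\mathcal{R}_S\setminus\mathcal{R}_U;\mathcal{F},A_{1:N}^{[k,\mathcal{R}_U]},W_k,\mathcal{R}_U)=0$. *)

(* Defs.v *)
From HB Require Import structures.
From mathcomp Require Import all_boot all_order all_algebra.
From mathcomp Require Import reals exp.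
Set Implicit Arguments. Unset Strict Implicit. Unset Printing Implicit Defensive.
Import Order.TTheory GRing.Theory Num.Theory.
Local Open Scope ring_scope.

Section InfoTheory.
Variables (R : realType) (Omega : finType) (P : {ffun Omega -> R}) (q : nat).

Definition is_distr : Prop := (forall w, 0 <= P w) /\ \sum_(w : Omega) P w = 1.

Definition prob (T : finType) (X : Omega -> T) (x : T) : R :=
  \sum_(w : Omega | X w == x) P w.

Definition logq (x : R) : R := ln x / ln (q%:R).

(* Shannon entropy, q-ary units (0 log 0 = 0 automatically since the
   term is multiplied by prob = 0) *)
Definition entropy (T : finType) (X : Omega -> T) : R :=
  - \sum_(x : T) prob X x * logq (prob X x).

Definition jointRV (T1 T2 : finType) (X : Omega -> T1) (Y : Omega -> T2) :
  Omega -> (T1 * T2)%type := fun w => (X w, Y w).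

Definition condEntropy (T1 T2 : finType) (X : Omega -> T1) (Y : Omega -> T2) : R :=
  entropy (jointRV X Y) - entropy Y.

Definition mutualInfo (T1 T2 : finType) (X : Omega -> T1) (Y : Omega -> T2) : R :=
  entropy X + entropy Y - entropy (jointRV X Y).

Definition same_distr (T : finType) (X Y : Omega -> T) : Prop :=
  forall x, prob X x = prob Y x.

Definition uniformRV (T : finType) (X : Omega -> T) : Prop :=
  forall x, prob X x = (#|T|%:R)^-1.

End InfoTheory.

(* Restriction of a component vector to the index set U: components outside
   U are erased (None).  Used for R_U (U), R_S \ R_U (~: U), W_{\bar k}. *)
Definition restrictRV (Omega : finType) (M : nat) (S : finType)
  (X : Omega -> {ffun 'I_M -> S}) (U : {set 'I_M}) :
  Omega -> {ffun 'I_M -> option S} :=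
  fun w => [ffun i => if i \in U then Some (X w i) else None].

Definition gatherRV (Omega : finType) (N : nat) (T : finType)
  (X : 'I_N -> Omega -> T) : Omega -> {ffun 'I_N -> T} :=
  fun w => [ffun n => X n w].

(* A SPIR scheme with user-side common randomness.
   - W : the messages W_{1:K}, each a vector of L symbols of the field F
   - RS : server-side common randomness, with M components in S
   - Fr : the user's strategy randomness F
   - Q n k U, A n k U : query to / answer from database n when retrieving
     W_k with user-side randomness R_U = components of RS indexed by U.
   The admissible R_U are the subsets of components of cardinality m. *)
Section Scheme.
Variables (R : realType) (Omega : finType) (P : {ffun Omega -> R})
  (F : finFieldType) (N K L M m : nat) (S TF TQ TA : finType)
  (W : Omega -> {ffun 'I_K -> {ffun 'I_L -> F}})
  (RS : Omega -> {ffun 'I_M -> S}) (Fr : Omega -> TF)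
  (Q : 'I_N -> 'I_K -> {set 'I_M} -> Omega -> TQ)
  (A : 'I_N -> 'I_K -> {set 'I_M} -> Omega -> TA).

Local Notation H := (entropy P #|F|).
Local Notation Hc := (condEntropy P #|F|).
Local Notation I := (mutualInfo P #|F|).
Local Notation RU U := (restrictRV RS U).
Local Notation Wk k := (fun w => W w k).
Local Notation Wbar k := (restrictRV W (~: [set k])).
Local Notation Qall k U := (gatherRV (fun n => Q n k U)).
Local Notation Aall k U := (gatherRV (fun n => A n k U)).

Record valid_scheme : Prop := {
  (* (C1) I(W_{1:K} ; k, F, R_S, R_U) = 0  (k is a fixed index) *)
  C1 : forall (k : 'I_K) (U : {set 'I_M}), #|U| = m ->
         I W (jointRV Fr (jointRV RS (RU U))) = 0;
  C2 : forall (k : 'I_K) (U : {set 'I_M}), #|U| = m ->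
         I (Qall k U) (jointRV W (RU (~: U))) = 0;
  C3 : forall (k : 'I_K) (U : {set 'I_M}), #|U| = m ->
         Hc (Qall k U) Fr = 0;
  C4 : forall (k : 'I_K) (n : 'I_N) (U : {set 'I_M}), #|U| = m ->
         Hc (A n k U) (jointRV (Q n k U) (jointRV W RS)) = 0;
  C5 : forall (k : 'I_K) (U : {set 'I_M}), #|U| = m ->
         Hc (Wk k) (jointRV Fr (jointRV (Aall k U) (RU U))) = 0;
  C6 : forall (k k' : 'I_K) (n : 'I_N) (U : {set 'I_M}), #|U| = m ->
         exists U' : {set 'I_M}, #|U'| = m /\ H (RU U') = H (RU U) /\
           same_distr P
             (jointRV (Q n k U) (jointRV (A n k U) (jointRV W RS)))
             (jointRV (Q n k' U') (jointRV (A n k' U') (jointRV W RS)));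
  C7 : forall (k : 'I_K) (U : {set 'I_M}), #|U| = m ->
         I (Wbar k) (jointRV Fr (jointRV (Aall k U) (RU U))) = 0;
  C8 : forall (k : 'I_K) (U : {set 'I_M}), #|U| = m ->
         I (RU (~: U)) (jointRV Fr (jointRV (Aall k U) (jointRV (Wk k) (RU U)))) = 0
}.

End Scheme.

(* Main.v *)
Require Import Defs.
From HB Require Import structures.
From mathcomp Require Import all_boot all_order all_algebra.
From mathcomp Require Import reals exp.
From mathcomp Require Import ring lra.
Import Order.TTheory GRing.Theory Num.Theory.
Local Open Scope ring_scope.
Set Implicit Arguments. Unset Strict Implicit. Unset Printing Implicit Defensive.

Section Ent.
Variables (R : realType) (Omega : finType) (P : {ffun Omega -> R}) (q : nat).
Hypothesis HP : is_distr P.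
Hypothesis Hq : (1 < q)%N.

Local Notation H := (entropy P q).

Lemma P_ge0 w : 0 <= P w. Proof. by case: HP. Qed.

Lemma prob_ge0 (T : finType) (X : Omega -> T) x : 0 <= prob P X x.
Proof. by apply: sumr_ge0 => w _; exact: P_ge0. Qed.

Lemma sumE (T : finType) (V : Omega -> T) (f : T -> R) :
  \sum_w P w * f (V w) = \sum_v prob P V v * f v.
Proof.
rewrite /prob.
transitivity (\sum_v \sum_w (if V w == v then P w * f v else 0)); last first.
  apply: eq_bigr => v _; rewrite big_distrl /= [RHS]big_mkcond /=.
  by apply: eq_bigr => w _; case: ifP; rewrite ?mul0r.
rewrite exchange_big /=; apply: eq_bigr => w _.
rewrite (bigD1 (V w)) //= eqxx big1 ?addr0 // => v /negbTE.
by rewrite eq_sym => ->.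
Qed.

Lemma P_le_prob (T : finType) (X : Omega -> T) w : P w <= prob P X (X w).
Proof.
rewrite /prob (bigD1 w) //= lerDl; apply: sumr_ge0 => w' _; exact: P_ge0.
Qed.

Lemma entropyE (T : finType) (X : Omega -> T) :
  H X = - \sum_w P w * logq q (prob P X (X w)).
Proof. by rewrite /entropy (sumE X (fun v => logq q (prob P X v))). Qed.

Lemma lnq_gt0 : 0 < ln (q%:R : R).
Proof. apply: ln_gt0; by rewrite ltr1n. Qed.

Lemma prob_comp (T1 T2 : finType) (X : Omega -> T1) (g : T1 -> T2) y :
  prob P (fun w => g (X w)) y = \sum_(x | g x == y) prob P X x.
Proof.
have h := sumE X (fun x => (g x == y)%:R).
rewrite [RHS]big_mkcond /=.
rewrite (eq_bigr (fun x => prob P X x * (g x == y)%:R)); last first.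
  by move=> x _; case: (g x == y); rewrite ?mulr1 ?mulr0.
rewrite -h /prob big_mkcond /=; apply: eq_bigr => w _.
by case: (g (X w) == y); rewrite ?mulr1 ?mulr0.
Qed.

Lemma prob_le_comp (T1 T2 : finType) (X : Omega -> T1) (g : T1 -> T2) w :
  prob P X (X w) <= prob P (fun w => g (X w)) (g (X w)).
Proof.
rewrite /prob; rewrite [X in _ <= X](bigID (fun w' => X w' == X w)) /=.
rewrite -[X in X <= _]addr0 lerD //.
  rewrite le_eqVlt; apply/orP; left; apply/eqP; apply: eq_bigl => w'.
  by case: (eqVneq (X w') (X w)) => [->|_]; rewrite ?eqxx ?andbF.
by apply: sumr_ge0 => w' _; exact: P_ge0.
Qed.

Lemma H_comp_le (T1 T2 : finType) (X : Omega -> T1) (g : T1 -> T2) :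
  H (fun w => g (X w)) <= H X.
Proof.
rewrite !entropyE lerN2; apply: ler_sum => w _.
have [P0|Ppos] := eqVneq (P w) 0; first by rewrite P0 !mul0r.
have Pp : 0 < P w by rewrite lt_def Ppos P_ge0.
apply: ler_wpM2l; first exact: P_ge0.
rewrite /logq ler_pM2r ?invr_gt0 ?lnq_gt0 //.
have h1 := P_le_prob X w.
rewrite ler_ln ?posrE; last 2 first.
- exact: lt_le_trans Pp h1.
- exact: lt_le_trans Pp (le_trans h1 (prob_le_comp X g w)).
exact: prob_le_comp.
Qed.

Lemma H_le (T1 T2 : finType) (X : Omega -> T1) (Y : Omega -> T2) (g : T2 -> T1) :
  (forall w, X w = g (Y w)) -> H X <= H Y.
Proof.
move=> hX; apply: le_trans (H_comp_le Y g); rewrite le_eqVlt; apply/orP; left.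
have E x : prob P X x = prob P (fun w => g (Y w)) x.
  by apply: eq_bigl => w; rewrite hX.
by apply/eqP; rewrite /entropy; congr (- _); apply: eq_bigr => x _; rewrite E.
Qed.

Lemma H_eq (T1 T2 : finType) (X : Omega -> T1) (Y : Omega -> T2) g h :
  (forall w, X w = g (Y w)) -> (forall w, Y w = h (X w)) -> H X = H Y.
Proof.
move=> h1 h2; apply/eqP; rewrite eq_le (H_le h1) (H_le h2) //.
Qed.


Lemma sum_prob (T : finType) (Z : Omega -> T) : \sum_z prob P Z z = 1.
Proof.
have := sumE Z (fun _ => 1); under eq_bigr do rewrite mulr1.
under [X in _ = X -> _]eq_bigr do rewrite mulr1.
by move=> <-; case: HP.
Qed.

Lemma marg (T1 T3 : finType) (X : Omega -> T1) (Z : Omega -> T3) z :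
  \sum_x prob P (jointRV X Z) (x, z) = prob P Z z.
Proof.
have := prob_comp (jointRV X Z) snd z.
rewrite (_ : prob P (fun w => (jointRV X Z w).2) z = prob P Z z) //.
move=> ->.
rewrite -(pair_big_dep xpredT (fun _ j => j == z) (fun x j => prob P (jointRV X Z) (x, j))) /=.
by apply: eq_bigr => x _; rewrite big_pred1_eq.
Qed.

Lemma lnle (t : R) : 0 < t -> ln t <= t - 1.
Proof.
move=> t0; have := @le_ln1Dx R (t - 1).
rewrite addrCA subrr addr0; apply.
lra.
Qed.

Lemma Csum (T1 T2 T3 : finType) (X : Omega -> T1) (Y : Omega -> T2) (Z : Omega -> T3) :
  \sum_(v : T1 * (T2 * T3)) prob P (jointRV X Z) (v.1, v.2.2) *
     (prob P (jointRV Y Z) v.2 / prob P Z v.2.2) <= 1.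
Proof.
rewrite -(pair_big xpredT xpredT (fun x p => prob P (jointRV X Z) (x, p.2) *
     (prob P (jointRV Y Z) p / prob P Z p.2))) /=.
rewrite exchange_big /=.
rewrite -(sum_prob (jointRV Y Z)).
apply: ler_sum => p _.
rewrite -mulr_suml marg.
have [->|nz] := eqVneq (prob P Z p.2) 0; first by rewrite mul0r prob_ge0.
by rewrite mulrCA mulfV // mulr1.
Qed.

Lemma Sbound (T1 T2 T3 : finType) (X : Omega -> T1) (Y : Omega -> T2) (Z : Omega -> T3) :
  \sum_w P w * (prob P (jointRV X Z) (jointRV X Z w) * prob P (jointRV Y Z) (jointRV Y Z w)
     / (prob P (jointRV X (jointRV Y Z)) (jointRV X (jointRV Y Z) w) * prob P Z (Z w))) <= 1.
Proof.
pose V := jointRV X (jointRV Y Z).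
pose G := fun v : T1 * (T2 * T3) => prob P (jointRV X Z) (v.1, v.2.2) *
     prob P (jointRV Y Z) v.2 / (prob P V v * prob P Z v.2.2).
have -> := sumE V G.
apply: le_trans (Csum X Y Z); apply: ler_sum => v _.
rewrite /G.
have [->|nz] := eqVneq (prob P V v) 0.
  rewrite mul0r mulr_ge0 ?prob_ge0 // divr_ge0 ?prob_ge0 //.
have E (p n b' : R) : p != 0 -> p * (n / (p * b')) = n / b'.
  by move=> pn; rewrite invfM mulrCA !mulrA mulfK.
by rewrite E // mulrA.
Qed.

Lemma H_submod (T1 T2 T3 : finType) (X : Omega -> T1) (Y : Omega -> T2) (Z : Omega -> T3) :
  H (jointRV X (jointRV Y Z)) + H Z <= H (jointRV X Z) + H (jointRV Y Z).
Proof.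
pose V := jointRV X (jointRV Y Z).
pose a := fun w => prob P V (V w).
pose b := fun w => prob P Z (Z w).
pose c := fun w => prob P (jointRV X Z) (jointRV X Z w).
pose d := fun w => prob P (jointRV Y Z) (jointRV Y Z w).
have key : \sum_w P w * (logq q (c w) + logq q (d w) - logq q (a w) - logq q (b w)) <= 0.
  apply: (@le_trans _ _ (\sum_w P w * ((c w * d w / (a w * b w)) - 1) / ln (q%:R : R))).
    apply: ler_sum => w _.
    have [P0|Pn] := eqVneq (P w) 0; first by rewrite P0 !mul0r.
    have Pp : 0 < P w by rewrite lt_def Pn P_ge0.
    have ap : 0 < a w := lt_le_trans Pp (P_le_prob V w).
    have bp : 0 < b w := lt_le_trans Pp (P_le_prob Z w).
    have cp : 0 < c w := lt_le_trans Pp (P_le_prob (jointRV X Z) w).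
    have dp : 0 < d w := lt_le_trans Pp (P_le_prob (jointRV Y Z) w).
    rewrite -mulrA ler_wpM2l ?P_ge0 //.
    have -> : logq q (c w) + logq q (d w) - logq q (a w) - logq q (b w) =
       (ln (c w) + ln (d w) - ln (a w) - ln (b w)) / ln (q%:R : R) by rewrite /logq; ring.
    rewrite ler_pM2r ?invr_gt0 ?lnq_gt0 //.
    have -> : ln (c w) + ln (d w) - ln (a w) - ln (b w) = ln (c w * d w / (a w * b w)).
      rewrite ln_div ?posrE ?mulr_gt0 // !lnM ?posrE //; ring.
    apply: lnle; by rewrite divr_gt0 ?mulr_gt0.
  rewrite -mulr_suml.
  have -> : \sum_w P w * (c w * d w / (a w * b w) - 1) =
            \sum_w P w * (c w * d w / (a w * b w)) - \sum_w P w.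
    by rewrite -sumrB; apply: eq_bigr => w _; rewrite mulrBr mulr1.
  have [_ ->] := HP.
  rewrite pmulr_lle0 ?invr_gt0 ?lnq_gt0 // subr_le0.
  exact: Sbound.
have eq : \sum_w P w * (logq q (c w) + logq q (d w) - logq q (a w) - logq q (b w)) =
   \sum_w P w * logq q (c w) + \sum_w P w * logq q (d w)
   - \sum_w P w * logq q (a w) - \sum_w P w * logq q (b w).
  rewrite -big_split -!sumrB; apply: eq_bigr => w _ /=; ring.
rewrite !entropyE -/a -/b -/c -/d.
move: key; rewrite eq; lra.
Qed.


Local Notation J := jointRV.

Lemma H_swap (T1 T2 : finType) (X : Omega -> T1) (Y : Omega -> T2) :
  H (J X Y) = H (J Y X).
Proof. by apply: (@H_eq _ _ _ _ (fun p => (p.2, p.1)) (fun p => (p.2, p.1))). Qed.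

Lemma H_fst (T1 T2 : finType) (X : Omega -> T1) (Y : Omega -> T2) : H X <= H (J X Y).
Proof. exact: (@H_le _ _ _ _ fst). Qed.

Lemma H_const : H (fun _ => tt) = 0.
Proof.
rewrite entropyE (_ : prob P (fun _ : Omega => tt) tt = 1).
  by rewrite /logq ln1 mul0r big1 ?oppr0 // => w _; rewrite mulr0.
by rewrite /prob; case: HP => _ <-; apply: eq_bigl.
Qed.

Lemma subadd (T1 T2 : finType) (X : Omega -> T1) (Y : Omega -> T2) :
  H (J X Y) <= H X + H Y.
Proof.
have := H_submod X Y (fun _ => tt).
rewrite H_const addr0.
rewrite (@H_eq _ _ (J X (J Y (fun _ => tt))) (J X Y) (fun p => (p.1, (p.2, tt))) (fun p => (p.1, p.2.1))) //.
rewrite (@H_eq _ _ (J X (fun _ => tt)) X (fun x => (x, tt)) fst) //.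
by rewrite (@H_eq _ _ (J Y (fun _ => tt)) Y (fun x => (x, tt)) fst).
Qed.

Definition det (T1 T2 : finType) (X : Omega -> T1) (Y : Omega -> T2) := H (J X Y) = H X.

Lemma det_fun (T1 T2 : finType) (X : Omega -> T1) (Y : Omega -> T2) g :
  (forall w, Y w = g (X w)) -> det X Y.
Proof.
move=> hY; apply: (@H_eq _ _ _ _ (fun x => (x, g x)) fst) => // w.
by rewrite /J /jointRV hY.
Qed.

Lemma det_le (T1 T2 : finType) (X : Omega -> T1) (Y : Omega -> T2) :
  det X Y -> H Y <= H X.
Proof. by rewrite /det => <-; exact: (@H_le _ _ _ _ snd). Qed.

Lemma det_trans (T1 T2 T3 : finType) (X : Omega -> T1) (Y : Omega -> T2) (Z : Omega -> T3) :
  det X Y -> det Y Z -> det X Z.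
Proof.
rewrite /det => h1 h2.
have s := H_submod X Z Y.
rewrite h1 (H_swap Z Y) h2 in s.
have l1 : H (J X Z) <= H (J X (J Z Y)) by apply: (@H_le _ _ _ _ (fun p => (p.1, p.2.1))).
have l2 := H_fst X Z.
apply/eqP; rewrite eq_le l2 andbT; lra.
Qed.

Lemma det_pair (T1 T2 T3 : finType) (X : Omega -> T1) (Y : Omega -> T2) (Z : Omega -> T3) :
  det X Y -> det X Z -> det X (J Y Z).
Proof.
rewrite /det => h1 h2.
have s := H_submod Y Z X.
rewrite (H_swap Y X) (H_swap Z X) h1 h2 in s.
rewrite (@H_eq _ _ (J Y (J Z X)) (J X (J Y Z)) (fun p => (p.2.1, (p.2.2, p.1))) (fun p => (p.2.2, (p.1, p.2.1)))) // in s.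
have l2 := H_fst X (J Y Z).
apply/eqP; rewrite eq_le l2 andbT; lra.
Qed.

Lemma det_cond (T1 T2 : finType) (X : Omega -> T1) (Y : Omega -> T2) :
  condEntropy P q Y X = 0 -> det X Y.
Proof. by rewrite /condEntropy /det H_swap => /eqP; rewrite subr_eq0 => /eqP. Qed.

Lemma indep_det (T1 T2 T3 : finType) (Z : Omega -> T1) (X : Omega -> T2) (Y : Omega -> T3) :
  mutualInfo P q Z X = 0 -> det X Y -> mutualInfo P q Z Y = 0.
Proof.
rewrite /mutualInfo /det => h1 h2.
have s := H_submod Z X Y.
rewrite h2 in s.
have l1 : H (J Z X) <= H (J Z (J X Y)) by apply: (@H_le _ _ _ _ (fun p => (p.1, p.2.1))).
have l3 := subadd Z Y.
apply/eqP; rewrite subr_eq0 eq_le l3 /=; lra.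
Qed.

Lemma mi_swap (T1 T2 : finType) (X : Omega -> T1) (Y : Omega -> T2) :
  mutualInfo P q X Y = mutualInfo P q Y X.
Proof. rewrite /mutualInfo (H_swap X Y); lra. Qed.

Lemma transfer (T T1 : finType) (A1 A2 : Omega -> T) (Z1 Z2 : Omega -> T1) (g : T -> T1) :
  same_distr P A1 A2 -> (forall w, Z1 w = g (A1 w)) -> (forall w, Z2 w = g (A2 w)) ->
  H Z1 = H Z2.
Proof.
move=> sd h1 h2.
have E x : prob P Z1 x = prob P Z2 x.
  have -> : prob P Z1 x = prob P (fun w => g (A1 w)) x by apply: eq_bigl => w; rewrite h1.
  have -> : prob P Z2 x = prob P (fun w => g (A2 w)) x by apply: eq_bigl => w; rewrite h2.
  by rewrite !prob_comp; apply: eq_bigr => t _; rewrite sd.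
by rewrite /entropy; congr (- _); apply: eq_bigr => x _; rewrite E.
Qed.

End Ent.

Theorem mainTheorem13 (R : realType) (Omega : finType) (P : {ffun Omega -> R})
  (F : finFieldType) (N K L M m : nat) (S TF TQ TA : finType)
  (W : Omega -> {ffun 'I_K -> {ffun 'I_L -> F}})
  (RS : Omega -> {ffun 'I_M -> S}) (Fr : Omega -> TF)
  (Q : 'I_N -> 'I_K -> {set 'I_M} -> Omega -> TQ)
  (A : 'I_N -> 'I_K -> {set 'I_M} -> Omega -> TA) :
  is_distr P ->
  (1 <= N)%N -> (2 <= K)%N ->
  uniformRV P W ->
  valid_scheme P m W RS Fr Q A ->
  forall (n : 'I_N) (k : 'I_K) (U : {set 'I_M}), #|U| = m ->
    0 >= condEntropy P #|F| (A n k U) (jointRV (Q n k U) (restrictRV RS U))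
         - entropy P #|F| RS.
Proof.
move=> HP _ K2 _ VS n k U HU.
have Hq : (1 < #|F|)%N by exact: card_finNzRing_gt1.
have [k' nk] : exists k' : 'I_K, k' != k.
  have o0 : (0 < K)%N by apply: leq_trans K2.
  case: (eqVneq k (Ordinal o0)) => e; [exists (Ordinal K2) | exists (Ordinal o0)].
    by rewrite e.
  by rewrite eq_sym.
pose X1 := fun w => W w k'.
pose X2 := restrictRV W (~: [set k']).
pose A0 := A n k U. pose Q0 := Q n k U. pose RU := restrictRV RS U.
pose d0 := [ffun _ : 'I_L => (0 : F)].
have i1 : mutualInfo P #|F| X1 (jointRV A0 Q0) = 0.
  have c7 := C7 VS k HU.
  have dA : det P #|F| (jointRV Fr (jointRV (gatherRV (fun n => A n k U)) (restrictRV RS U))) A0.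
    by apply: (det_fun HP Hq (g := fun t : TF * ({ffun 'I_N -> TA} * {ffun 'I_M -> option S}) => t.2.1 n)) => w; rewrite /= ffunE.
  have dQ : det P #|F| (jointRV Fr (jointRV (gatherRV (fun n => A n k U)) (restrictRV RS U))) Q0.
    apply: (det_trans HP Hq (Y := Fr)).
      exact: (det_fun HP Hq (g := fst)).
    apply: (det_trans HP Hq (Y := gatherRV (fun n => Q n k U))).
      exact: (det_cond HP Hq (C3 VS k HU)).
    by apply: (det_fun HP Hq (g := fun t : {ffun 'I_N -> TQ} => t n)) => w; rewrite /= ffunE.
  have := indep_det HP Hq c7 (det_pair HP Hq dA dQ).
  rewrite (mi_swap HP Hq) => h.
  rewrite (mi_swap HP Hq); apply: (indep_det HP Hq h).
  apply: (det_fun HP Hq (g := fun f : {ffun 'I_K -> option {ffun 'I_L -> F}} => odflt d0 (f k'))) => w.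
  by rewrite /restrictRV ffunE !inE (negbTE nk).
have [U' [HU' [_ sd]]] := C6 VS k k' n HU.
pose A1 := A n k' U'. pose Q1 := Q n k' U'.
have i2' : mutualInfo P #|F| X2 (jointRV A1 (jointRV Q1 X1)) = 0.
  have c7 := C7 VS k' HU'.
  have dA : det P #|F| (jointRV Fr (jointRV (gatherRV (fun n => A n k' U')) (restrictRV RS U'))) A1.
    by apply: (det_fun HP Hq (g := fun t : TF * ({ffun 'I_N -> TA} * {ffun 'I_M -> option S}) => t.2.1 n)) => w; rewrite /= ffunE.
  have dQ : det P #|F| (jointRV Fr (jointRV (gatherRV (fun n => A n k' U')) (restrictRV RS U'))) Q1.
    apply: (det_trans HP Hq (Y := Fr)).
      exact: (det_fun HP Hq (g := fst)).
    apply: (det_trans HP Hq (Y := gatherRV (fun n => Q n k' U'))).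
      exact: (det_cond HP Hq (C3 VS k' HU')).
    by apply: (det_fun HP Hq (g := fun t : {ffun 'I_N -> TQ} => t n)) => w; rewrite /= ffunE.
  have dX := det_cond HP Hq (C5 VS k' HU').
  exact: (indep_det HP Hq c7 (det_pair HP Hq dA (det_pair HP Hq dQ dX))).
have tr (T1 : finType) (g : (TQ * (TA * ({ffun 'I_K -> {ffun 'I_L -> F}} * {ffun 'I_M -> S})))%type -> T1) (Z1 Z2 : Omega -> T1) :
    (forall w, Z1 w = g (jointRV Q0 (jointRV A0 (jointRV W RS)) w)) ->
    (forall w, Z2 w = g (jointRV Q1 (jointRV A1 (jointRV W RS)) w)) ->
    entropy P #|F| Z1 = entropy P #|F| Z2.
  by move=> h1 h2; apply: (transfer _ sd h1 h2).
have i2 : mutualInfo P #|F| X2 (jointRV A0 (jointRV Q0 X1)) = 0.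
  move: i2'; rewrite /mutualInfo.
  rewrite -(tr _ (fun t : (TQ * (TA * ({ffun 'I_K -> {ffun 'I_L -> F}} * {ffun 'I_M -> S})))%type => (t.2.1, (t.1, t.2.2.1 k'))) (jointRV A0 (jointRV Q0 X1))) //.
  by rewrite -(tr _ (fun t : (TQ * (TA * ({ffun 'I_K -> {ffun 'I_L -> F}} * {ffun 'I_M -> S})))%type => ([ffun i => if i \in ~: [set k'] then Some (t.2.2.1 i) else None], (t.2.1, (t.1, t.2.2.1 k')))) (jointRV X2 (jointRV A0 (jointRV Q0 X1)))).
have eqa : entropy P #|F| (jointRV A0 (jointRV Q0 X1)) = entropy P #|F| (jointRV X1 (jointRV A0 Q0)).
  exact: (H_eq HP Hq (g := fun p => (p.2.1, (p.2.2, p.1))) (h := fun p => (p.2.2, (p.1, p.2.1)))).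
have dbase : det P #|F| (jointRV Q0 (jointRV W RS)) (jointRV X2 (jointRV A0 (jointRV Q0 X1))).
  apply: det_pair => //.
    by apply: (det_fun HP Hq (g := fun t : TQ * ({ffun 'I_K -> {ffun 'I_L -> F}} * {ffun 'I_M -> S}) => [ffun i => if i \in ~: [set k'] then Some (t.2.1 i) else None])).
  apply: det_pair => //.
    exact: (det_cond HP Hq (C4 VS k n HU)).
  apply: det_pair => //.
    exact: (det_fun HP Hq (g := fst)).
  exact: (det_fun HP Hq (g := fun t : TQ * ({ffun 'I_K -> {ffun 'I_L -> F}} * {ffun 'I_M -> S}) => t.2.1 k')).
have le1 := det_le HP Hq dbase.
have le2 := subadd HP Hq Q0 (jointRV W RS).
have le3 := subadd HP Hq W RS.
have le4 : entropy P #|F| W <= entropy P #|F| (jointRV X1 X2).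
  apply: (H_le HP Hq (g := fun p : {ffun 'I_L -> F} * {ffun 'I_K -> option {ffun 'I_L -> F}} => [ffun j => if j == k' then p.1 else odflt p.1 (p.2 j)])) => w.
  apply/ffunP => j; rewrite !ffunE /=.
  case: eqP => [->|/eqP ne] //.
  by rewrite !inE ne.
have le5 := subadd HP Hq X1 X2.
have sub := H_submod HP Hq A0 RU Q0.
have eqb : entropy P #|F| (jointRV A0 (jointRV RU Q0)) = entropy P #|F| (jointRV A0 (jointRV Q0 RU)).
  exact: (H_eq HP Hq (g := fun p => (p.1, (p.2.2, p.2.1))) (h := fun p => (p.1, (p.2.2, p.2.1)))).
rewrite eqb (H_swap HP Hq RU Q0) in sub.
move: i1 i2; rewrite /mutualInfo /condEntropy eqa => i1 i2.
lra.
Qed.
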